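(* Let $p_0(x)=1/\sqrt\pi$, $p_n(\cos\theta)=\sqrt{2/\pi}\cos(n\theta)$ ($n\ge1$) be the orthonormal Chebyshev polynomials of the first kind. For $n\in\mathbb{N}$ and $x\in(-1,1)$ let $\lambda_n(x)=\big(\sum_{i=0}^{n-1}p_i^2(x)\big)^{-1}$, $\Psi_{n,j}(x)=\lambda_n(x)p_{j-1}^2(x)$ ($j=1,\dots,n$), $\mathcal S(\bm\Psi_n(x))=-\sum_{j=1}^n\Psi_{n,j}(x)\log\Psi_{n,j}(x)$, and $\mathcal D_\infty(x)=\lim_{n\to\infty}\big(\log n-\mathcal S(\bm\Psi_n(x))\big)$. Let $x=\cos\theta$ with $\theta/\pi=s/k$, where $s,k\in\mathbb{N}$, $s<k$, $\operatorname{GCD}(s,k)=1$. Then $$\mathcal D_\infty(x)=\begin{cases}1-\log2+\mathcal R\!\left(\frac1k\right)>1-\log2, & k \text{ even},\\[2mm] 1-\log2+2\Big[\mathcal R\!\left(\frac1{2k}\right)-\frac12\mathcal R\!\left(\frac1k\right)\Big]<1-\log2, & k\text{ odd},\end{cases}$$ where $\mathcal R(y)=-y\big(\psi(1-y)+2\gamma+\psi(1+y)\big)$ for $|y|<1$.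
   Context: $\psi=\Gamma'/\Gamma$ is the digamma function and $\gamma$ is the Euler–Mascheroni constant; equivalently $\mathcal R(y)=2\sum_{m\ge1}\zeta(2m+1)y^{2m+1}$ for $|y|<1$, with $\zeta$ the Riemann zeta function. $\theta\in(0,\pi)$. $\operatorname{GCD}$ is the greatest common divisor. *)

(* Defs.v *)
From Stdlib Require Import Reals.
From Coquelicot Require Import Coquelicot.
Open Scope R_scope.

Definition cheb (n : nat) (x : R) : R :=
  match n with
  | O => / sqrt PI
  | S _ => sqrt (2 / PI) * cos (INR n * acos x)
  end.

Definition lambda_n (n : nat) (x : R) : R :=
  / sum_n (fun i => (cheb i x) ^ 2) (n - 1).

Definition Psi (n j : nat) (x : R) : R := lambda_n n x * (cheb (j - 1) x) ^ 2.

(* Shannon entropy S(Psi_n(x)) = - sum_{j=1}^n Psi_{n,j} log Psi_{n,j}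
   (Stdlib's ln 0 = 0, so the convention 0 log 0 = 0 holds). *)
Definition entropy (n : nat) (x : R) : R :=
  - sum_n (fun i => Psi n (S i) x * ln (Psi n (S i) x)) (n - 1).

Definition Dn (n : nat) (x : R) : R := ln (INR n) - entropy n x.

Definition euler_gamma : R :=
  real (Lim_seq (fun n => sum_n (fun i => / INR (S i)) n - ln (INR (S n)))).

Definition digamma (z : R) : R :=
  - euler_gamma + Series (fun n => / INR (S n) - / (INR n + z)).

Definition Rfun (y : R) : R :=
  - y * (digamma (1 - y) + 2 * euler_gamma + digamma (1 + y)).

(* Main.v *)
Require Import Defs.
From Stdlib Require Import Reals Arith.
From Coquelicot Require Import Coquelicot.
From Stdlib Require Import Lra Lia ZArith.
Open Scope R_scope.

Lemma cont_of_der (f : R -> R) x l : is_derive f x l -> continuity_pt f x.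
Proof.
  intro H. apply continuity_pt_filterlim. apply (ex_derive_continuous f x).
  exists l; exact H.
Qed.

Lemma lim_inv_SS : is_lim_seq (fun n => / INR (S (S n))) 0.
Proof.
  assert (H := is_lim_seq_INR).
  apply is_lim_seq_inv in H; [|discriminate]. simpl in H.
  apply is_lim_seq_incr_1 in H. apply is_lim_seq_incr_1 in H. exact H.
Qed.

Lemma sum_n_extR (a b : nat -> R) (N : nat) :
  (forall n, a n = b n) -> sum_n a N = sum_n b N.
Proof. intro H. apply sum_n_ext. exact H. Qed.

Lemma lim_cps (L a : R) : is_lim_seq (fun M => L + a * / INR (S (S M))) L.
Proof.
  assert (H0 : is_lim_seq (fun M => a * / INR (S (S M))) 0).
  { pose proof (is_lim_seq_scal_l _ a 0 lim_inv_SS) as H. simpl in H.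
    rewrite Rmult_0_r in H. exact H. }
  pose proof (is_lim_seq_plus' (fun _ => L) (fun M => a * / INR (S (S M))) L 0
    (is_lim_seq_const L) H0) as H.
  simpl in H. rewrite Rplus_0_r in H. exact H.
Qed.

Definition Fs (phi : R) (M : nat) : R :=
  sum_n (fun m => (-1)^m * cos (INR (S m) * phi) / INR (S m)) M.

Lemma closed_form (phi r : R) (M : nat) :
  (1 + 2*r*cos phi + r^2) * sum_n (fun m => (-r)^m * cos (INR (S m) * phi)) M
  = cos phi + r - (-r)^(S M) * cos (INR (S (S M)) * phi)
      + (-r)^(S (S M)) * cos (INR (S M) * phi).
Proof.
  induction M.
  - rewrite sum_O. simpl.
    replace ((1+1)*phi) with (phi+phi) by ring. rewrite cos_plus.
    replace (1*phi) with phi by ring.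
    pose proof (sin2_cos2 phi). unfold Rsqr in *.
    replace (sin phi * sin phi) with (1 - cos phi * cos phi) by lra. ring.
  - rewrite sum_Sn. change plus with Rplus. rewrite Rmult_plus_distr_l, IHM.
    set (C2 := cos (INR (S (S M)) * phi)).
    replace (INR (S (S (S M))) * phi) with (INR (S (S M)) * phi + phi) by (rewrite !(S_INR (S (S M))); ring).
    replace (INR (S M) * phi) with (INR (S (S M)) * phi - phi) by (rewrite !(S_INR (S M)); ring).
    rewrite cos_plus, cos_minus. fold C2.
    simpl pow. ring.
Qed.

Lemma deriv_poly (a : nat -> R) (M : nat) (r : R) :
  is_derive (fun t => sum_n (fun m => a m * t^(S m)) M) r
            (sum_n (fun m => a m * INR (S m) * r^m) M).
Proof.
  apply (is_derive_sum_n (fun m t => a m * t^(S m))).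
  intros m _. auto_derive; auto. simpl. ring.
Qed.

Lemma div_of (den S X : R) : den <> 0 -> den * S = X -> S = X / den.
Proof. intros H E. rewrite <- E. field. exact H. Qed.

Lemma num_bound r n C1 C2 : 0 <= r <= 1 ->
  Rabs ((-r)^(S n) * cos C1 - (-r)^(S (S n)) * cos C2) <= 2 * r^(S n).
Proof.
  intro Hr. unfold Rminus. eapply Rle_trans. apply Rabs_triang.
  rewrite Rabs_Ropp, !Rabs_mult, <- !RPow_abs, Rabs_Ropp, Rabs_right by lra.
  pose proof (COS_bound C1). pose proof (COS_bound C2).
  assert (Rabs (cos C1) <= 1) by (apply Rabs_le; lra).
  assert (Rabs (cos C2) <= 1) by (apply Rabs_le; lra).
  assert (0 <= r^(S n)) by (apply pow_le; lra).
  change (r^(S (S n))) with (r * r^(S n)).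
  pose proof (Rabs_pos (cos C1)). pose proof (Rabs_pos (cos C2)).
  assert (r ^ S n * Rabs (cos C1) <= r^(S n) * 1) by (apply Rmult_le_compat_l; lra).
  assert (r * r ^ S n * Rabs (cos C2) <= r^(S n) * 1).
  { apply Rle_trans with (1 * r^(S n) * 1).
    apply Rmult_le_compat; try lra. apply Rmult_le_pos; lra.
    apply Rmult_le_compat_r; lra. lra. }
  lra.
Qed.

Lemma mvt_bound (f f' g g' : R -> R) :
  (forall r, 0 <= r <= 1 -> is_derive f r (f' r)) ->
  (forall r, 0 <= r <= 1 -> is_derive g r (g' r)) ->
  (forall r, 0 <= r <= 1 -> f' r <= g' r) ->
  f 1 - f 0 <= g 1 - g 0.
Proof.
  intros Hf Hg Hle.
  destruct (MVT_gen (fun r => f r - g r) 0 1 (fun r => f' r - g' r)) as [c [Hc Heq]].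
  - intros r Hr. rewrite Rmin_left in Hr by lra. rewrite Rmax_right in Hr by lra.
    apply (is_derive_minus f g); [apply Hf|apply Hg]; lra.
  - intros r Hr. rewrite Rmin_left in Hr by lra. rewrite Rmax_right in Hr by lra.
    apply (cont_of_der _ _ (f' r - g' r)).
    apply (is_derive_minus f g); [apply Hf|apply Hg]; lra.
  - rewrite Rmin_left in Hc by lra. rewrite Rmax_right in Hc by lra.
    specialize (Hle c Hc). nra.
Qed.

Lemma pow_neg (r : R) (m : nat) : (-r)^m = (-1)^m * r^m.
Proof. replace (-r) with (-1 * r) by ring. apply Rpow_mult_distr. Qed.

Lemma fourier (phi : R) : 0 < 1 + cos phi ->
  is_lim_seq (Fs phi) (ln (2 + 2 * cos phi) / 2).
Proof.
  intro Hc. set (c := cos phi) in *.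
  set (d := Rmin (1/4) (1 + c)).
  assert (Hd : 0 < d) by (unfold d; apply Rmin_glb_lt; lra).
  assert (Hden : forall r, 0 <= r <= 1 -> d <= 1 + 2*r*c + r^2).
  { intros r Hr. unfold d. destruct (Rle_lt_dec r (1/2)).
    - apply Rle_trans with (1/4). apply Rmin_l. nra.
    - apply Rle_trans with (1+c). apply Rmin_r. nra. }
  assert (Hbound : forall M, Rabs (Fs phi M - ln (2 + 2*c)/2) <= 2 / (d * INR (S (S M)))).
  { intro M.
    set (a := fun m => (-1)^m * cos (INR (S m) * phi) / INR (S m)).
    set (h := fun r => ln (1 + 2*r*c + r^2) / 2 - sum_n (fun m => a m * r^(S m)) M).
    set (h' := fun r => (c + r) / (1 + 2*r*c + r^2) - sum_n (fun m => a m * INR (S m) * r^m) M).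
    set (B := fun r => 2 * r^(S (S M)) / (d * INR (S (S M)))).
    set (B' := fun r => 2 * r^(S M) / d).
    assert (HSS : 0 < INR (S (S M))) by apply lt_0_INR, Nat.lt_0_succ.
    assert (Dh : forall r, 0 <= r <= 1 -> is_derive h r (h' r)).
    { intros r Hr. specialize (Hden r Hr).
      apply (is_derive_minus (fun r => ln (1 + 2*r*c + r^2) / 2)
               (fun r => sum_n (fun m => a m * r^(S m)) M)).
      - auto_derive. lra. field. lra.
      - apply deriv_poly. }
    assert (DB : forall r, is_derive B r (B' r)).
    { intro r. replace (B' r) with (2/(d*INR (S (S M))) * (INR (S (S M)) * 1 * r^(pred (S (S M))))).
      apply (is_derive_ext (fun t => 2/(d*INR (S (S M))) * (t^(S (S M))))).
      intros t; unfold B; change (@eq R (2 / (d * INR (S (S M))) * t ^ S (S M)) (2 * t ^ S (S M) / (d * INR (S (S M))))); field; lra.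
      apply is_derive_scal. apply (is_derive_pow (fun t => t)). auto_derive; auto.
      unfold B'. simpl pred. field. lra. }
    assert (DnB : forall r, is_derive (fun r => - B r) r (- B' r)).
    { intro r. apply (is_derive_opp B). apply DB. }
    assert (Hh' : forall r, 0 <= r <= 1 -> Rabs (h' r) <= B' r).
    { intros r Hr. specialize (Hden r Hr). unfold h', B'.
      assert (E : sum_n (fun m => a m * INR (S m) * r^m) M
                  = sum_n (fun m => (-r)^m * cos (INR (S m) * phi)) M).
      { apply sum_n_extR. intro m. unfold a. rewrite pow_neg. field.
        apply not_0_INR. discriminate. }
      rewrite E.
      assert (E2 : @eq R (sum_n (fun m => (-r)^m * cos (INR (S m) * phi)) M)
        ((c + r - (-r)^(S M) * cos (INR (S (S M)) * phi)
      + (-r)^(S (S M)) * cos (INR (S M) * phi)) / (1 + 2*r*c + r^2))).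
      { pose proof (closed_form phi r M) as CF. fold c in CF. apply div_of. lra. exact CF. }
      rewrite E2.
      replace ((c + r) / (1 + 2 * r * c + r ^ 2) -
        (c + r - (-r) ^ S M * cos (INR (S (S M)) * phi) +
         (-r) ^ S (S M) * cos (INR (S M) * phi)) / (1 + 2 * r * c + r ^ 2))
      with (((-r) ^ S M * cos (INR (S (S M)) * phi) -
         (-r) ^ S (S M) * cos (INR (S M) * phi)) / (1 + 2 * r * c + r ^ 2))
      by (field; lra).
      rewrite Rabs_div by lra. rewrite (Rabs_right (1 + 2*r*c + r^2)) by lra.
      apply Rle_trans with (2 * r^(S M) / (1 + 2 * r * c + r ^ 2)).
      - apply Rmult_le_compat_r. left; apply Rinv_0_lt_compat; lra.
        apply num_bound; lra.
      - unfold Rdiv. apply Rmult_le_compat_l.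
        apply Rmult_le_pos; [lra|apply pow_le; lra].
        apply Rinv_le_contravar; lra. }
    assert (H0 : h 0 = 0).
    { unfold h. rewrite (sum_n_extR _ (fun _ => 0)).
      rewrite sum_n_const. replace (1 + 2*0*c + 0^2) with 1 by ring. rewrite ln_1. lra.
      intro m. simpl. ring. }
    assert (H1 : h 1 = ln (2 + 2*c)/2 - Fs phi M).
    { unfold h, Fs. rewrite (sum_n_extR (fun m => a m * 1^(S m)) a).
      replace (1 + 2*1*c + 1^2) with (2 + 2*c) by ring. reflexivity.
      intro m. rewrite pow1. ring. }
    assert (B0 : B 0 = 0) by (unfold B; rewrite pow_i by lia; unfold Rdiv; ring).
    assert (B1 : B 1 = 2 / (d * INR (S (S M)))) by (unfold B; rewrite pow1, Rmult_1_r; reflexivity).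
    assert (U : h 1 - h 0 <= B 1 - B 0).
    { apply (mvt_bound h h' B B'); auto.
      intros r Hr. specialize (Hh' r Hr). apply Rabs_le_between in Hh'. lra. }
    assert (L : (fun r => - B r) 1 - (fun r => - B r) 0 <= h 1 - h 0).
    { apply (mvt_bound (fun r => - B r) (fun r => - B' r) h h'); auto.
      intros r Hr. specialize (Hh' r Hr). apply Rabs_le_between in Hh'. lra. }
    simpl in L. rewrite H0, H1, B0, B1 in *.
    apply Rabs_le. lra. }
  apply is_lim_seq_le_le with
    (u := fun M => ln (2 + 2*c)/2 + (-(2/d)) * / INR (S (S M)))
    (w := fun M => ln (2 + 2*c)/2 + (2/d) * / INR (S (S M))).
  - intro M. specialize (Hbound M). apply Rabs_le_between in Hbound.
    replace (2 / (d * INR (S (S M)))) with ((2/d) * / INR (S (S M))) in Hbound.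
    lra. field. split. apply not_0_INR. discriminate. lra.
  - apply lim_cps.
  - apply lim_cps.
Qed.

Fixpoint ss (f : nat -> R) (n : nat) : R :=
  match n with O => 0 | S n => ss f n + f n end.

Lemma ss_ext (f g : nat -> R) n : (forall i, (i < n)%nat -> f i = g i) -> ss f n = ss g n.
Proof. induction n; intro H; simpl; auto. rewrite IHn, H; auto. Qed.

Lemma ss_plus f g n : ss (fun i => f i + g i) n = ss f n + ss g n.
Proof. induction n; simpl; [ring|rewrite IHn; ring]. Qed.

Lemma ss_scal a f n : ss (fun i => a * f i) n = a * ss f n.
Proof. induction n; simpl; [ring|rewrite IHn; ring]. Qed.

Lemma ss_const a n : ss (fun _ => a) n = INR n * a.
Proof. induction n; simpl ss; [simpl; ring|rewrite IHn, S_INR; ring]. Qed.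

Lemma ss_add f a b : ss f (a + b) = ss f a + ss (fun i => f (a + i)%nat) b.
Proof. induction b; simpl. rewrite Nat.add_0_r; ring. rewrite Nat.add_succ_r. simpl. rewrite IHb. ring. Qed.

Lemma ss_point f a n : (a < n)%nat ->
  ss (fun i => f i * (if Nat.eqb i a then 1 else 0)) n = f a.
Proof.
  induction n; intro H. lia. simpl.
  destruct (Nat.eq_dec a n).
  - subst. rewrite Nat.eqb_refl.
    rewrite (ss_ext _ (fun _ => 0)). rewrite ss_const. ring.
    intros i Hi. replace (Nat.eqb i n) with false. ring. symmetry; apply Nat.eqb_neq; lia.
  - replace (Nat.eqb n a) with false. rewrite IHn by lia. ring.
    symmetry; apply Nat.eqb_neq; lia.
Qed.

Lemma sum_n_ss (f : nat -> R) N : sum_n f N = ss f (S N).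
Proof. induction N. rewrite sum_O. simpl. ring. rewrite sum_Sn. change plus with Rplus. rewrite IHN. reflexivity. Qed.

Lemma cos_sum_tele (a : R) (k : nat) :
  2 * sin (a/2) * ss (fun j => cos (INR j * a)) k = sin ((INR k - 1/2) * a) + sin (a/2).
Proof.
  induction k.
  - simpl. replace ((0 - 1/2)*a) with (-(a/2)) by field. rewrite sin_neg. ring.
  - simpl ss. rewrite Rmult_plus_distr_l, IHk.
    replace ((INR (S k) - 1/2)*a) with (INR k * a + a/2) by (rewrite S_INR; field).
    replace ((INR k - 1/2)*a) with (INR k * a - a/2) by field.
    rewrite sin_plus, sin_minus. ring.
Qed.

Lemma cos_2piN (N : nat) : cos (2 * INR N * PI) = 1.
Proof. pose proof (cos_period 0 N). rewrite Rplus_0_l, cos_0 in H. exact H. Qed.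

Section Trig.
Variables s k : nat.
Hypothesis Hs : (0 < s)%nat.
Hypothesis Hsk : (s < k)%nat.
Hypothesis Hg : Nat.gcd s k = 1%nat.

Definition th := PI * INR s / INR k.

Definition Zs (n : nat) := ss (fun j => cos (INR n * (2 * (INR j * th)))) k.

Lemma Hk0 : 0 < INR k.
Proof. apply lt_0_INR. lia. Qed.

Lemma Zs_div n : Nat.divide k n -> Zs n = INR k.
Proof.
  intros [q Hq]. unfold Zs. rewrite (ss_ext _ (fun _ => 1)). rewrite ss_const. ring.
  intros j _. subst n. pose proof Hk0.
  replace (INR (q * k) * (2 * (INR j * th))) with (2 * INR (q*j*s) * PI).
  apply cos_2piN. unfold th. rewrite !mult_INR. field. lra.
Qed.

Lemma Zs_ndiv n : ~ Nat.divide k n -> Zs n = 0.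
Proof.
  intro Hn. pose proof Hk0.
  set (a := 2 * INR n * th).
  assert (Hsin : sin (a/2) <> 0).
  { intro H0. apply sin_eq_0_0 in H0. destruct H0 as [z Hz].
    unfold a, th in Hz.
    assert (E : INR (n*s) = IZR z * INR k).
    { rewrite mult_INR. apply (Rmult_eq_reg_r (PI / INR k)).
      replace (IZR z * INR k * (PI / INR k)) with (IZR z * PI) by (field; lra).
      rewrite <- Hz. field. lra.
      pose proof PI_RGT_0. apply Rgt_not_eq. unfold Rdiv. apply Rmult_gt_0_compat; auto.
      apply Rinv_0_lt_compat; lra. }
    rewrite INR_IZR_INZ, INR_IZR_INZ, <- mult_IZR in E. apply eq_IZR in E.
    assert (Hz0 : (0 <= z)%Z).
    { assert (0 < Z.of_nat k)%Z by lia. nia. }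
    assert (Eq : (n * s = Z.to_nat z * k)%nat).
    { apply Nat2Z.inj. rewrite !Nat2Z.inj_mul, Z2Nat.id by exact Hz0. rewrite <- Nat2Z.inj_mul. lia. }
    apply Hn. apply (Nat.gauss _ s). exists (Z.to_nat z). lia.
    rewrite Nat.gcd_comm. exact Hg. }
  pose proof (cos_sum_tele a k) as T.
  replace ((INR k - 1/2) * a) with (- (a/2) + 2 * INR (n*s) * PI) in T.
  rewrite sin_period, sin_neg, Rplus_opp_l in T.
  unfold Zs. rewrite (ss_ext _ (fun j => cos (INR j * a))).
  apply (Rmult_eq_reg_l (2 * sin (a/2))). rewrite T. ring.
  intro; apply Hsin; lra.
  intros j _. f_equal. unfold a. ring.
  unfold a, th. rewrite mult_INR. field. lra.
Qed.


Definition w (j : nat) := 1 + cos (2 * (INR j * th)).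
Definition Sm (m : nat) := ss (fun j => w j * cos (INR m * (2 * (INR j * th)))) k.

Lemma Sm_Z m : (1 <= m)%nat -> Sm m = Zs m + /2 * Zs (S m) + /2 * Zs (m - 1).
Proof.
  intro Hm. unfold Sm, Zs. rewrite <- !ss_scal, <- !ss_plus. apply ss_ext. intros j _.
  unfold w. set (p := 2 * (INR j * th)).
  replace (INR (S m) * p) with (INR m * p + p) by (rewrite S_INR; ring).
  replace (INR (m - 1) * p) with (INR m * p - p) by (rewrite minus_INR by lia; simpl; ring).
  rewrite cos_plus, cos_minus. field.
Qed.

Lemma ndiv_small m : (0 < m < k)%nat -> ~ Nat.divide k m.
Proof. intros Hm Hd. apply Nat.divide_pos_le in Hd; lia. Qed.

Lemma div_shift P m : Nat.divide k (P * k + m) <-> Nat.divide k m.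
Proof.
  split; intro H.
  - apply (Nat.divide_add_cancel_r _ (P*k)). exists P; reflexivity. exact H.
  - apply Nat.divide_add_r. exists P; reflexivity. exact H.
Qed.

Lemma Z_eval1 P i : (i < k)%nat -> Zs (P * k + S i) = if Nat.eqb i (k - 1) then INR k else 0.
Proof.
  intro Hi. destruct (Nat.eqb_spec i (k-1)).
  - apply Zs_div. apply div_shift. exists 1%nat. lia.
  - apply Zs_ndiv. rewrite div_shift. apply ndiv_small. lia.
Qed.

Lemma Z_eval2 P i : (i < k)%nat -> Zs (P * k + S (S i)) = if Nat.eqb i (k - 2) then INR k else 0.
Proof.
  intro Hi. destruct (Nat.eqb_spec i (k-2)).
  - apply Zs_div. apply div_shift. exists 1%nat. lia.
  - apply Zs_ndiv. rewrite div_shift. intros [c Hc]. destruct c as [|[|c]]; lia.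
Qed.

Lemma Z_eval0 P i : (i < k)%nat -> Zs (P * k + i) = if Nat.eqb i 0 then INR k else 0.
Proof.
  intro Hi. destruct (Nat.eqb_spec i 0).
  - apply Zs_div. apply div_shift. subst. exists 0%nat. lia.
  - apply Zs_ndiv. rewrite div_shift. apply ndiv_small. lia.
Qed.

Definition tt (m : nat) := (-1)^m / INR (S m) * Sm (S m) / INR k.

Lemma block P :
  ss (fun i => tt (P * k + i)) k =
  (-1)^(P*k + (k-1)) / INR (S (P*k + (k-1)))
  + /2 * ((-1)^(P*k + (k-2)) / INR (S (P*k + (k-2))))
  + /2 * ((-1)^(P*k + 0) / INR (S (P*k + 0))).
Proof.
  pose proof Hk0 as Hk.
  set (f := fun i => (-1)^(P*k + i) / INR (S (P*k + i))).
  rewrite (ss_ext _ (fun i => f i * (if Nat.eqb i (k-1) then 1 else 0)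
     + /2 * (f i * (if Nat.eqb i (k-2) then 1 else 0))
     + /2 * (f i * (if Nat.eqb i 0 then 1 else 0)))).
  - rewrite !ss_plus, !ss_scal, !ss_point by lia. reflexivity.
  - intros i Hi. unfold tt. rewrite Sm_Z by lia.
    replace (S (P*k+i)) with (P*k + S i)%nat by lia.
    replace (S (P*k + S i)) with (P*k + S (S i))%nat by lia.
    replace (P * k + S i - 1)%nat with (P*k + i)%nat by lia.
    rewrite Z_eval1, Z_eval2, Z_eval0 by lia. unfold f.
    replace (P*k + S i)%nat with (S (P*k+i)) by lia.
    destruct (Nat.eqb i (k-1)), (Nat.eqb i (k-2)), (Nat.eqb i 0); field; repeat split; try lra; apply not_0_INR; lia.
Qed.

Definition sg := (-1)^k.
Definition gq (q : nat) := /2 / (INR q * INR k - 1) + /2 / (INR q * INR k + 1) - / (INR q * INR k).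

Lemma H_closed P : ss tt (P * k) =
  /2 - /2 * sg^P / (INR P * INR k + 1) + ss (fun q => sg^(S q) * gq (S q)) P.
Proof.
  pose proof Hk0 as Hk.
  assert (Hk2 : 2 <= INR k). { replace 2 with (INR 2) by (simpl; ring). apply le_INR. lia. }
  induction P.
  - simpl. field.
  - replace (S P * k)%nat with (P * k + k)%nat by lia.
    rewrite ss_add, IHP, block. simpl ss.
    assert (E0 : (-1)^(P*k + (k-1)) = - sg^(S P)).
    { unfold sg. rewrite <- pow_mult. replace (k * S P)%nat with (S (P*k + (k-1))) by lia.
      simpl. ring. }
    assert (E1 : (-1)^(P*k + (k-2)) = sg^(S P)).
    { unfold sg. rewrite <- pow_mult. replace (k * S P)%nat with (S (S (P*k + (k-2)))) by lia.
      simpl. ring. }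
    assert (E2 : (-1)^(P*k + 0) = sg^P).
    { unfold sg. rewrite <- pow_mult. f_equal. lia. }
    rewrite E0, E1, E2.
    replace (INR (S (P * k + (k - 1)))) with ((INR P + 1) * INR k)
      by (replace (S (P * k + (k - 1))) with (S P * k)%nat by lia; rewrite mult_INR, S_INR; ring).
    replace (INR (S (P * k + (k - 2)))) with ((INR P + 1) * INR k - 1)
      by (replace (S (P * k + (k - 2))) with (S P * k - 1)%nat by lia;
          rewrite minus_INR by lia; rewrite mult_INR, S_INR; simpl; ring).
    replace (INR (S (P * k + 0))) with (INR P * INR k + 1)
      by (rewrite S_INR, plus_INR, mult_INR; simpl; ring).
    unfold gq. rewrite S_INR.
    assert (0 <= INR P) by apply pos_INR.
    set (X := ss _ P). replace (sg ^ S P) with (sg * sg^P) by reflexivity.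
    set (Y := sg ^ P). set (K := INR k). set (Q := INR P). clearbody X Y.
    field. unfold K, Q in *. repeat split; nra.
Qed.

End Trig.

Lemma series_lim (a : nat -> R) (l : R) : is_series a l -> is_lim_seq (sum_n a) l.
Proof. intro H. exact H. Qed.
Lemma lim_series (a : nat -> R) (l : R) : is_lim_seq (sum_n a) l -> is_series a l.
Proof. intro H. exact H. Qed.

Definition Rterm (y : R) (n : nat) : R :=
  -y * ((/ INR (S n) - / (INR n + (1 - y))) + (/ INR (S n) - / (INR n + (1 + y)))).

Lemma tele_series : is_series (fun n => 2 / (INR (S n) * INR (S (S n)))) 2.
Proof.
  apply lim_series.
  apply (is_lim_seq_ext (fun M => 2 + (-2) * / INR (S (S M)))).
  - intro M. induction M.
    + rewrite sum_O. simpl. field.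
    + rewrite sum_Sn. change plus with Rplus. rewrite <- IHM.
      rewrite !S_INR. pose proof (pos_INR M). field. lra.
  - apply lim_cps.
Qed.

Lemma ex_series_a (y : R) (sgn : R) : 0 < y <= 1/2 -> (sgn = 1 \/ sgn = -1) ->
  ex_series (fun n => / INR (S n) - / (INR n + (1 + sgn * y))).
Proof.
  intros Hy Hsg.
  apply (@ex_series_le R_AbsRing R_CompleteNormedModule _ (fun n => 2 / (INR (S n) * INR (S (S n))))).
  - intro n. change norm with Rabs. simpl norm.
    pose proof (pos_INR n). rewrite !S_INR.
    replace (/ (INR n + 1) - / (INR n + (1 + sgn * y)))
      with (sgn * y / ((INR n + 1) * (INR n + 1 + sgn * y))).
    2:{ field. destruct Hsg; subst; split; lra. }
    rewrite Rabs_div.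
    2:{ destruct Hsg; subst; apply Rgt_not_eq; apply Rmult_lt_0_compat; lra. }
    rewrite Rabs_mult, (Rabs_right y) by lra.
    rewrite (Rabs_right ((INR n + 1) * (INR n + 1 + sgn * y))).
    2:{ destruct Hsg; subst; apply Rle_ge; apply Rmult_le_pos; lra. }
    assert (Rabs sgn = 1) by (destruct Hsg; subst; unfold Rabs; destruct (Rcase_abs _); lra).
    rewrite H0, Rmult_1_l.
    unfold Rdiv. apply Rle_trans with (y * / ((INR n + 1) * ((INR n + 1)/2))).
    + apply Rmult_le_compat_l. lra. apply Rinv_le_contravar.
      apply Rmult_lt_0_compat; lra.
      apply Rmult_le_compat_l. lra. destruct Hsg; subst; lra.
    + apply Rle_trans with (1/2 * / ((INR n + 1) * ((INR n + 1)/2))).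
      apply Rmult_le_compat_r. left; apply Rinv_0_lt_compat; apply Rmult_lt_0_compat; lra. lra.
      apply Rle_trans with (/((INR n + 1)*(INR n + 1))). right; field; lra.
      replace (2 * / ((INR n + 1) * (INR n + 1 + 1))) with (/((INR n + 1) * (INR n + 1 + 1)/2)) by (field; lra).
      apply Rinv_le_contravar. nra. nra.
  - exists 2. apply tele_series.
Qed.

Lemma ex_series_am (y : R) : 0 < y <= 1/2 ->
  ex_series (fun n => / INR (S n) - / (INR n + (1 - y))).
Proof.
  intro Hy. apply (@ex_series_ext R_AbsRing R_NormedModule (fun n => / INR (S n) - / (INR n + (1 + -1 * y)))).
  intro n. replace (1 + -1 * y) with (1 - y) by ring. reflexivity.
  apply ex_series_a; auto.
Qed.

Lemma ex_series_ap (y : R) : 0 < y <= 1/2 ->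
  ex_series (fun n => / INR (S n) - / (INR n + (1 + y))).
Proof.
  intro Hy. apply (@ex_series_ext R_AbsRing R_NormedModule (fun n => / INR (S n) - / (INR n + (1 + 1 * y)))).
  intro n. replace (1 + 1 * y) with (1 + y) by ring. reflexivity.
  apply ex_series_a; auto.
Qed.

Lemma ex_Rterm (y : R) : 0 < y <= 1/2 -> ex_series (Rterm y).
Proof.
  intro Hy. unfold Rterm.
  apply (@ex_series_scal_l R_AbsRing R_NormedModule (-y) (fun n => (/ INR (S n) - / (INR n + (1 - y))) + (/ INR (S n) - / (INR n + (1 + y))))).
  apply (@ex_series_plus R_AbsRing R_NormedModule).
  apply ex_series_am; auto. apply ex_series_ap; auto.
Qed.

Lemma Rfun_series (y : R) : 0 < y <= 1/2 -> Series (Rterm y) = Rfun y.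
Proof.
  intro Hy. unfold Rfun, digamma, Rterm.
  rewrite Series_scal_l, Series_plus by (apply ex_series_am || apply ex_series_ap; auto).
  ring.
Qed.

Lemma Rfun_is (y : R) : 0 < y <= 1/2 -> is_lim_seq (sum_n (Rterm y)) (Rfun y).
Proof.
  intro Hy. rewrite <- Rfun_series by auto. apply series_lim. apply Series_correct.
  apply ex_Rterm; auto.
Qed.

Lemma Rterm_eq (y : R) (n : nat) : 0 < y <= 1/2 ->
  Rterm y n = 2 * y^3 / (INR (S n) * ((INR (S n))^2 - y^2)).
Proof.
  intro Hy. unfold Rterm. pose proof (pos_INR n). rewrite S_INR.
  field. repeat split; try lra; nra.
Qed.

Lemma lim_opp (u : nat -> R) (l : R) : is_lim_seq u l -> is_lim_seq (fun n => - u n) (- l).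
Proof. intro H. apply is_lim_seq_opp in H. exact H. Qed.

Lemma lim_scal (a : R) (u : nat -> R) (l : R) : is_lim_seq u l -> is_lim_seq (fun n => a * u n) (a * l).
Proof. intro H. apply (is_lim_seq_scal_l _ a) in H. exact H. Qed.

Lemma lim_ge_first (a : nat -> R) (L : R) :
  (forall n, 0 <= a n) -> is_lim_seq (sum_n a) L -> a 0%nat <= L.
Proof.
  intros Ha HL.
  assert (Hb : forall n, a 0%nat <= sum_n a n).
  { induction n. rewrite sum_O. lra. rewrite sum_Sn. change plus with Rplus.
    specialize (Ha (S n)). lra. }
  pose proof (is_lim_seq_le (fun _ => a 0%nat) (sum_n a) (a 0%nat) L Hb (is_lim_seq_const _) HL).
  simpl in H. exact H.
Qed.

Lemma Rfun_pos (y : R) : 0 < y <= 1/2 -> 0 < Rfun y.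
Proof.
  intro Hy.
  assert (Hpos : forall n, 0 < Rterm y n).
  { intro n. rewrite Rterm_eq by auto. pose proof (pos_INR n). rewrite S_INR.
    apply Rdiv_lt_0_compat. pose proof (pow_lt y 3). nra.
    apply Rmult_lt_0_compat. lra. nra. }
  apply Rlt_le_trans with (Rterm y 0).
  apply Hpos.
  apply lim_ge_first. intro n; left; apply Hpos. apply Rfun_is; auto.
Qed.

Lemma Rfun_odd (y : R) : 0 < y <= 1/2 -> 2 * Rfun (y/2) - Rfun y < 0.
Proof.
  intro Hy.
  set (c := fun n => - (2 * Rterm (y/2) n - Rterm y n)).
  assert (Hpos : forall n, 0 < c n).
  { intro n. unfold c. rewrite !Rterm_eq by lra. pose proof (pos_INR n). rewrite S_INR.
    set (m := INR n + 1).
    assert (Hm : 1 <= m) by (unfold m; lra).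
    replace (2 * (2 * (y / 2) ^ 3 / (m * (m ^ 2 - (y / 2) ^ 2))) -
       2 * y ^ 3 / (m * (m ^ 2 - y ^ 2)))
      with (- (3 * y^3 * m / ((2*m^2 - y^2/2) * (m^2 - y^2)))).
    2:{ field. repeat split; try lra; nra. }
    rewrite Ropp_involutive.
    apply Rdiv_lt_0_compat. pose proof (pow_lt y 3). nra.
    apply Rmult_lt_0_compat; nra. }
  assert (HL : is_lim_seq (sum_n c) (- (2 * Rfun (y/2) - Rfun y))).
  { apply (is_lim_seq_ext (fun N => - (2 * sum_n (Rterm (y/2)) N - sum_n (Rterm y) N))).
    - intro N. unfold c. induction N.
      + rewrite !sum_O. reflexivity.
      + rewrite !sum_Sn. change plus with Rplus. rewrite <- IHN. ring.
    - apply lim_opp. apply is_lim_seq_minus'.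
      apply lim_scal. apply Rfun_is; lra. apply Rfun_is; auto. }
  pose proof (lim_ge_first c _ (fun n => Rlt_le _ _ (Hpos n)) HL).
  pose proof (Hpos 0%nat). lra.
Qed.

Lemma ss_swap (F : nat -> nat -> R) N K :
  ss (fun j => ss (fun m => F j m) N) K = ss (fun m => ss (fun j => F j m) K) N.
Proof.
  induction N; simpl.
  - rewrite ss_const. ring.
  - rewrite ss_plus, IHN. reflexivity.
Qed.

Lemma lim_ss (u : nat -> nat -> R) (l : nat -> R) K :
  (forall j, (j < K)%nat -> is_lim_seq (u j) (l j)) ->
  is_lim_seq (fun M => ss (fun j => u j M) K) (ss l K).
Proof.
  induction K; intro H; simpl.
  - apply is_lim_seq_const.
  - apply is_lim_seq_plus'. apply IHK. intros; apply H; lia. apply H; lia.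
Qed.

Lemma lim_uniq (u : nat -> R) (l1 l2 : R) : is_lim_seq u l1 -> is_lim_seq u l2 -> l1 = l2.
Proof.
  intros H1 H2. apply is_lim_seq_unique in H1. apply is_lim_seq_unique in H2.
  rewrite H1 in H2. injection H2. auto.
Qed.

Definition Wsum (s k : nat) :=
  ss (fun j => w s k j * (ln (2 + 2 * cos (2 * (INR j * th s k))) / 2)) k.

Section F.
Variables s k : nat.
Hypothesis Hs : (0 < s)%nat.
Hypothesis Hsk : (s < k)%nat.
Hypothesis Hg : Nat.gcd s k = 1%nat.

Lemma G_lim : is_lim_seq (fun M => ss (tt s k) (S M)) (Wsum s k / INR k).
Proof.
  pose proof (Hk0 s k Hs Hsk Hg) as Hk.
  set (phi := fun j => 2 * (INR j * th s k)).
  apply (is_lim_seq_ext (fun M => / INR k * ss (fun j => w s k j * Fs (phi j) M) k)).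
  - intro M. unfold Fs. 
    rewrite (ss_ext _ (fun j => ss (fun m => w s k j * ((-1) ^ m * cos (INR (S m) * phi j) / INR (S m))) (S M))).
    2:{ intros j _. rewrite sum_n_ss, <- ss_scal. reflexivity. }
    rewrite ss_swap, <- ss_scal. apply ss_ext. intros m _.
    unfold tt, Sm.
    transitivity (/INR k * ((-1)^m / INR (S m)) * ss (fun j => w s k j * cos (INR (S m) * (2 * (INR j * th s k)))) k).
    2:{ field. split. apply not_0_INR; discriminate. lra. }
    rewrite <- (ss_scal (/ INR k * ((-1) ^ m / INR (S m)))). rewrite <- ss_scal. apply ss_ext. intros j _. unfold phi. field.
    split. apply not_0_INR; discriminate. lra.
  - unfold Wsum. replace (ss (fun j => w s k j * (ln (2 + 2 * cos (2 * (INR j * th s k))) / 2)) k / INR k)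
      with (/ INR k * ss (fun j => w s k j * (ln (2 + 2 * cos (2 * (INR j * th s k))) / 2)) k) by (field; lra).
    apply lim_scal. apply (lim_ss (fun j M => w s k j * Fs (phi j) M)).
    intros j _. destruct (Rle_lt_or_eq_dec 0 (w s k j)).
    + unfold w. pose proof (COS_bound (2 * (INR j * th s k))). lra.
    + apply lim_scal. apply fourier. exact r.
    + rewrite <- e. apply (is_lim_seq_ext (fun _ => 0)). intro; ring.
      replace (0 * (ln (2 + 2 * cos (2 * (INR j * th s k))) / 2)) with 0 by ring.
      apply is_lim_seq_const.
Qed.


Lemma H_lim : is_lim_seq (fun P => ss (tt s k) (S P * k)) (Wsum s k / INR k).
Proof.
  pose proof (is_lim_seq_subseq _ _ (fun P => (S P * k - 1)%nat) ltac:(apply eventually_subseq; intro n; simpl; nia) G_lim) as H.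
  apply (is_lim_seq_ext (fun P => ss (tt s k) (S (S P * k - 1)))); [|exact H].
  intro P. f_equal. lia.
Qed.

Lemma gq_R (n : nat) : (2 <= k)%nat -> gq k (S n) = /2 * Rterm (/ INR k) n.
Proof.
  intro Hk2. pose proof (Hk0 s k Hs Hsk Hg) as Hk.
  assert (2 <= INR k) by (replace 2 with (INR 2) by (simpl; ring); apply le_INR; lia).
  unfold gq, Rterm. pose proof (pos_INR n). rewrite S_INR. field.
  repeat split; try lra; try nra.
Qed.


Lemma gq2_R (n : nat) : (2 <= k)%nat -> gq k (2 * S n) = /2 * Rterm (/ (2 * INR k)) n.
Proof.
  intro Hk2. pose proof (Hk0 s k Hs Hsk Hg) as Hk.
  assert (2 <= INR k) by (replace 2 with (INR 2) by (simpl; ring); apply le_INR; lia).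
  unfold gq, Rterm. pose proof (pos_INR n). rewrite mult_INR, (S_INR n). change (INR 2) with (1+1). field.
  repeat split; try lra; try nra.
Qed.

Lemma sg_vanish : is_lim_seq (fun P => /2 * sg k ^ (S P) / (INR (S P) * INR k + 1)) 0.
Proof.
  pose proof (Hk0 s k Hs Hsk Hg) as Hk.
  assert (1 <= INR k) by (replace 1 with (INR 1) by (simpl; ring); apply le_INR; lia).
  apply is_lim_seq_abs_0.
  apply is_lim_seq_le_le with (u := fun _ => 0) (w := fun P => 0 + 1 * / INR (S (S P))).
  - intro P. split. apply Rabs_pos.
    unfold sg. rewrite <- pow_mult. unfold Rdiv. rewrite !Rabs_mult, pow_1_abs.
    pose proof (pos_INR P). rewrite !S_INR.
    rewrite Rabs_right by lra. rewrite Rabs_right.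
    2: { apply Rle_ge. left. apply Rinv_0_lt_compat. nra. }
    rewrite Rmult_1_r. apply Rle_trans with (/ (INR P + 1 + 1)).
    2: lra.
    apply Rle_trans with (/ ((INR P + 1) * INR k + 1)).
    assert (0 < / ((INR P + 1) * INR k + 1)) by (apply Rinv_0_lt_compat; nra). lra.
    apply Rinv_le_contravar. lra. nra.
  - apply is_lim_seq_const.
  - apply lim_cps.
Qed.

Lemma alt_sum (a : nat -> R) N :
  ss (fun q => (-1)^(S q) * a (S q)) (2 * N) =
  2 * ss (fun p => a (2 * S p)%nat) N - ss (fun q => a (S q)) (2 * N).
Proof.
  induction N.
  - simpl. ring.
  - replace (2 * S N)%nat with (S (S (2 * N))) by lia. cbn [ss]. rewrite IHN.
    rewrite pow_1_odd.
    replace (S (S (2 * N))) with (2 * S N)%nat by lia. rewrite pow_1_even.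
    replace (S (2 * N)) with (2 * N + 1)%nat by lia.
    replace (2 * S N)%nat with (S (2 * N + 1)) by lia. ring.
Qed.

Lemma Wsum_even : Nat.Even k -> Wsum s k / INR k = /2 + /2 * Rfun (/ INR k).
Proof.
  intros [m Hm].
  pose proof (Hk0 s k Hs Hsk Hg) as Hk.
  assert (Hk2 : (2 <= k)%nat) by lia.
  assert (Hy : 0 < / INR k <= 1/2).
  { split. apply Rinv_0_lt_compat; lra.
    replace (1/2) with (/ INR 2) by (simpl; field). apply Rinv_le_contravar. simpl; lra. apply le_INR; lia. }
  apply (lim_uniq _ _ _ H_lim).
  assert (E : forall P, ss (tt s k) (S P * k) =
      (/2 - /2 * sg k ^ (S P) / (INR (S P) * INR k + 1)) + /2 * sum_n (Rterm (/ INR k)) P).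
  { intro P. rewrite H_closed by auto. f_equal.
    rewrite sum_n_ss, <- ss_scal. apply ss_ext. intros q _.
    assert (Esg : sg k = 1) by (unfold sg; rewrite Hm; apply pow_1_even).
    rewrite Esg, pow1, Rmult_1_l. apply gq_R. exact Hk2. }
  apply (is_lim_seq_ext _ _ _ (fun P => eq_sym (E P))).
  replace (/2 + /2 * Rfun (/ INR k)) with ((/2 - 0) + /2 * Rfun (/ INR k)) by ring.
  apply is_lim_seq_plus'. apply is_lim_seq_minus'. apply is_lim_seq_const.
  apply sg_vanish. apply lim_scal. apply Rfun_is. exact Hy.
Qed.

Lemma Wsum_odd : Nat.Odd k ->
  Wsum s k / INR k = /2 + Rfun (/ (2 * INR k)) - /2 * Rfun (/ INR k).
Proof.
  intros [m Hm].
  pose proof (Hk0 s k Hs Hsk Hg) as Hk.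
  assert (Hk2 : (2 <= k)%nat) by lia.
  assert (Hy : 0 < / INR k <= 1/2).
  { split. apply Rinv_0_lt_compat; lra.
    replace (1/2) with (/ INR 2) by (simpl; field). apply Rinv_le_contravar. simpl; lra. apply le_INR; lia. }
  assert (Hy' : 0 < / (2 * INR k) <= 1/2).
  { split. apply Rinv_0_lt_compat; lra.
    assert (2 <= INR k) by (replace 2 with (INR 2) by (simpl; ring); apply le_INR; lia).
    replace (1/2) with (/ 2) by field. apply Rinv_le_contravar; lra. }
  pose proof (is_lim_seq_subseq _ _ (fun P => (2 * P + 1)%nat) ltac:(apply eventually_subseq; intro n; lia) H_lim) as HL.
  apply (lim_uniq _ _ _ HL).
  assert (E : forall P, ss (tt s k) (S (2 * P + 1) * k) =
      (/2 - /2 * sg k ^ (S (2 * P + 1)) / (INR (S (2 * P + 1)) * INR k + 1))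
      + (2 * (/2 * sum_n (Rterm (/ (2 * INR k))) P) - /2 * sum_n (Rterm (/ INR k)) (2 * P + 1))).
  { intro P. rewrite H_closed by auto. f_equal.
    assert (Esg : sg k = -1) by (unfold sg; rewrite Hm; replace (2 * m + 1)%nat with (S (2 * m)) by lia; apply pow_1_odd).
    rewrite Esg. replace (S (2 * P + 1)) with (2 * S P)%nat by lia.
    rewrite alt_sum. f_equal.
    - f_equal. rewrite sum_n_ss, <- ss_scal. apply ss_ext. intros q _. apply gq2_R. exact Hk2.
    - replace (2 * S P)%nat with (S (2 * P + 1)) by lia.
      rewrite sum_n_ss, <- ss_scal. apply ss_ext. intros q _. apply gq_R. exact Hk2. }
  apply (is_lim_seq_ext _ _ _ (fun P => eq_sym (E P))).
  replace (/2 + Rfun (/ (2 * INR k)) - /2 * Rfun (/ INR k))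
    with ((/2 - 0) + (2 * (/2 * Rfun (/ (2 * INR k))) - /2 * Rfun (/ INR k))) by field.
  apply is_lim_seq_plus'. apply is_lim_seq_minus'. apply is_lim_seq_const.
  apply (is_lim_seq_subseq _ _ (fun P => (2 * P + 1)%nat) ltac:(apply eventually_subseq; intro n; lia) sg_vanish).
  apply is_lim_seq_minus'. apply lim_scal, lim_scal. apply Rfun_is. exact Hy'.
  apply lim_scal.
  apply (is_lim_seq_subseq (sum_n (Rterm (/ INR k))) _ (fun P => (2 * P + 1)%nat) ltac:(apply eventually_subseq; intro n; lia)).
  apply Rfun_is. exact Hy.
Qed.

End F.

Lemma lim_inv_S : is_lim_seq (fun n => / INR (S n)) 0.
Proof.
  assert (H := is_lim_seq_INR).
  apply is_lim_seq_inv in H; [|discriminate]. simpl in H.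
  apply is_lim_seq_incr_1 in H. exact H.
Qed.

Lemma lim_plus0 (c : R) (u : nat -> R) : is_lim_seq u 0 -> is_lim_seq (fun n => c + u n) c.
Proof.
  intro H. pose proof (is_lim_seq_plus' _ _ c 0 (is_lim_seq_const c) H) as H2.
  rewrite Rplus_0_r in H2. exact H2.
Qed.

Lemma ss_S_left (g : nat -> R) n : ss g (S n) = g 0%nat + ss (fun i => g (S i)) n.
Proof.
  replace (S n) with (1 + n)%nat by lia. rewrite ss_add. simpl. ring.
Qed.

Lemma ss_periodic (f : nat -> R) k : (forall i, f (i + k)%nat = f i) ->
  forall a, ss (fun i => f (a + i)%nat) k = ss f k.
Proof.
  intros Hp a. induction a.
  - apply ss_ext. intros; f_equal.
  - assert (H1 : ss (fun i => f (a + i)%nat) k + f (a + k)%nat = f a + ss (fun i => f (a + S i)%nat) k).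
    { pose proof (ss_S_left (fun i => f (a + i)%nat) k) as H. cbn [ss] in H.
      rewrite Nat.add_0_r in H. exact H. }
    rewrite <- IHa.
    assert (E : ss (fun i => f (a + S i)%nat) k = ss (fun i => f (S a + i)%nat) k)
      by (apply ss_ext; intros; f_equal; lia).
    rewrite <- E. rewrite Hp in H1. lra.
Qed.

Lemma ss_ge_term (g : nat -> R) n i : (forall j, 0 <= g j) -> (i < n)%nat -> g i <= ss g n.
Proof.
  intros Hg. induction n; intro Hi. lia. simpl.
  destruct (Nat.eq_dec i n). subst.
  assert (0 <= ss g n) by (clear -Hg; induction n; simpl; [lra| specialize (Hg n); lra]). lra.
  specialize (IHn ltac:(lia)). specialize (Hg n). lra.
Qed.

Lemma cesaro_periodic (f : nat -> R) (k : nat) : (0 < k)%nat ->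
  (forall i, f (i + k)%nat = f i) ->
  is_lim_seq (fun N => sum_n f N / INR (S N)) (ss f k / INR k).
Proof.
  intros Hk Hp.
  assert (HkR : 0 < INR k) by (apply lt_0_INR; lia).
  set (P := ss f k).
  set (e := fun N => sum_n f N - INR (S N) * P / INR k).
  assert (Eper : forall N, e (N + k)%nat = e N).
  { intro N. unfold e. rewrite !sum_n_ss.
    replace (S (N + k)) with (S N + k)%nat by lia.
    rewrite ss_add, ss_periodic by auto. fold P.
    rewrite plus_INR. field. lra. }
  set (Bd := ss (fun i => Rabs (e i)) k).
  assert (Hb : forall N, Rabs (e N) <= Bd).
  { intro N. induction N as [N IH] using (well_founded_induction Wf_nat.lt_wf).
    destruct (Nat.lt_ge_cases N k).
    - apply (ss_ge_term (fun i => Rabs (e i))). intro; apply Rabs_pos. exact H.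
    - replace N with ((N - k) + k)%nat by lia. rewrite Eper. apply IH. lia. }
  apply (is_lim_seq_ext (fun N => P / INR k + e N * / INR (S N))).
  - intro N. unfold e. field. split; [apply not_0_INR; discriminate | lra].
  - apply lim_plus0.
    apply is_lim_seq_abs_0.
    apply is_lim_seq_le_le with (u := fun _ => 0) (w := fun N => Bd * / INR (S N)).
    + intro N. split. apply Rabs_pos. rewrite Rabs_mult.
      rewrite (Rabs_right (/ INR (S N))).
      apply Rmult_le_compat_r. left; apply Rinv_0_lt_compat, lt_0_INR; lia. apply Hb.
      left; apply Rinv_0_lt_compat, lt_0_INR; lia.
    + apply is_lim_seq_const.
    + replace 0 with (Bd * 0) by ring. apply lim_scal. apply lim_inv_S.
Qed.

Section PartI.
Variables s k : nat.
Hypothesis Hs : (0 < s)%nat.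
Hypothesis Hsk : (s < k)%nat.
Hypothesis Hg : Nat.gcd s k = 1%nat.

Let x := cos (PI * INR s / INR k).
Let thk := th s k.

Lemma HkR : 0 < INR k.
Proof. apply lt_0_INR; lia. Qed.

Lemma acos_x : acos x = thk.
Proof.
  unfold x, thk, th. apply acos_cos. pose proof PI_RGT_0. pose proof HkR.
  assert (INR s <= INR k) by (apply le_INR; lia). pose proof (pos_INR s).
  split. apply Rmult_le_pos. apply Rmult_le_pos; lra. left; apply Rinv_0_lt_compat; lra.
  apply Rle_trans with (PI * INR k / INR k).
  unfold Rdiv. apply Rmult_le_compat_r. left; apply Rinv_0_lt_compat; lra.
  apply Rmult_le_compat_l; lra. right; field; lra.
Qed.

Definition bb (i : nat) := cheb i x ^ 2.
Definition uu (i : nat) := w s k i / PI.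

Lemma w_nonneg i : 0 <= w s k i.
Proof. unfold w. pose proof (COS_bound (2 * (INR i * th s k))). lra. Qed.

Lemma bb_S j : bb (S j) = uu (S j).
Proof.
  unfold bb, uu, cheb, w. rewrite acos_x. fold thk.
  pose proof PI_RGT_0.
  rewrite Rpow_mult_distr, pow2_sqrt.
  2:{ apply Rlt_le, Rdiv_lt_0_compat; lra. }
  rewrite cos_2a_cos. field. lra.
Qed.

Lemma bb_0 : bb 0 = / PI.
Proof.
  unfold bb, cheb. pose proof PI_RGT_0.
  rewrite <- Rinv_pow. rewrite pow2_sqrt by lra. reflexivity.
  apply Rgt_not_eq. apply sqrt_lt_R0. lra.
Qed.

Lemma uu_per i : uu (i + k)%nat = uu i.
Proof.
  unfold uu, w. f_equal. f_equal.
  replace (2 * (INR (i + k) * th s k)) with (2 * (INR i * th s k) + 2 * INR s * PI).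
  apply cos_period.
  unfold th. rewrite plus_INR. pose proof HkR. field. lra.
Qed.

Lemma bb_nonneg i : 0 <= bb i.
Proof. unfold bb. apply pow2_ge_0. Qed.

Lemma sum_w : ss (w s k) k = INR k.
Proof.
  unfold w. rewrite ss_plus, ss_const.
  pose proof (Zs_ndiv s k Hs Hsk Hg 1%nat) as Z1. unfold Zs in Z1.
  rewrite (ss_ext _ (fun j => cos (INR 1 * (2 * (INR j * th s k))))).
  rewrite Z1. ring.
  intros [d Hd]. destruct d; simpl in Hd; lia.
  intros i _. f_equal. simpl. ring.
Qed.

Lemma shift_sum (f g : nat -> R) N : (forall j, f (S j) = g (S j)) ->
  @eq R (sum_n f N) (sum_n g N + (f 0%nat - g 0%nat)).
Proof.
  intro H. rewrite !sum_n_ss, !ss_S_left. rewrite (ss_ext (fun i => f (S i)) (fun i => g (S i))).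
  ring. intros; apply H.
Qed.


Lemma T_pos N : 0 < sum_n bb N.
Proof.
  rewrite sum_n_ss, ss_S_left, bb_0. pose proof PI_RGT_0.
  assert (0 <= ss (fun i => bb (S i)) N).
  { clear. induction N; simpl. lra. pose proof (bb_nonneg (S N)). lra. }
  assert (0 < / PI) by (apply Rinv_0_lt_compat; lra). lra.
Qed.

Lemma term_id (T b : R) : 0 < T -> 0 <= b ->
  / T * b * ln (/ T * b) = / T * (b * ln b) - ln T * / T * b.
Proof.
  intros HT Hb. destruct Hb as [Hb|Hb].
  - rewrite ln_mult, ln_Rinv by (try apply Rinv_0_lt_compat; lra). ring.
  - subst. ring.
Qed.

Lemma Dn_eq N : Dn (S N) x = - ln (sum_n bb N / INR (S N)) +
   (sum_n (fun i => bb i * ln (bb i)) N / INR (S N)) / (sum_n bb N / INR (S N)).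
Proof.
  pose proof (T_pos N) as HT.
  unfold Dn, entropy, Psi, lambda_n.
  replace (S N - 1)%nat with N by lia.
  change (sum_n (fun i => cheb i x ^ 2) N) with (sum_n bb N).
  destruct (exist (fun T : R => T = sum_n bb N) _ eq_refl) as [T HTd]. rewrite <- HTd in *.
  rewrite (sum_n_extR _ (fun i => / T * (bb i * ln (bb i)) + (- ln T * / T) * bb i)).
  2:{ intro i. replace (S i - 1)%nat with i by lia. rewrite term_id. unfold bb. field. lra. exact HT. apply bb_nonneg. }
  rewrite sum_n_ss, ss_plus, !ss_scal, <- !sum_n_ss. rewrite <- HTd.
  assert (HN : 0 < INR (S N)) by (apply lt_0_INR; lia).
  rewrite ln_div by lra. field. lra.
Qed.


Lemma lim_shift (f g : nat -> R) (c : R) (K : nat) : (0 < K)%nat ->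
  (forall i, g (i + K)%nat = g i) -> (forall N, sum_n f N = sum_n g N + c) ->
  is_lim_seq (fun N => sum_n f N / INR (S N)) (ss g K / INR K).
Proof.
  intros HK Hp HE.
  apply (is_lim_seq_ext (fun N => sum_n g N / INR (S N) + c * / INR (S N))).
  - intro N. rewrite HE. field. apply not_0_INR; discriminate.
  - replace (ss g K / INR K) with (ss g K / INR K + c * 0) by ring.
    apply is_lim_seq_plus'. apply cesaro_periodic; auto. apply lim_scal. apply lim_inv_S.
Qed.

Lemma lim_T : is_lim_seq (fun N => sum_n bb N / INR (S N)) (/ PI).
Proof.
  pose proof HkR. pose proof PI_RGT_0.
  replace (/ PI) with (ss uu k / INR k).
  apply (lim_shift _ _ (bb 0%nat - uu 0%nat)). lia. apply uu_per.
  intro N. apply shift_sum. apply bb_S.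
  unfold uu. rewrite (ss_ext _ (fun i => / PI * w s k i)) by (intros; unfold Rdiv; ring).
  rewrite ss_scal, sum_w. field. lra.
Qed.

Lemma lim_BL : is_lim_seq (fun N => sum_n (fun i => bb i * ln (bb i)) N / INR (S N))
  (ss (fun i => uu i * ln (uu i)) k / INR k).
Proof.
  apply (lim_shift _ _ (bb 0%nat * ln (bb 0%nat) - uu 0%nat * ln (uu 0%nat))). lia.
  intro i. rewrite uu_per. reflexivity.
  intro N. apply shift_sum. intro j. rewrite bb_S. reflexivity.
Qed.

Lemma Dn_lim : is_lim_seq (fun n => Dn n x) (- ln (/ PI) + (ss (fun i => uu i * ln (uu i)) k / INR k) / (/ PI)).
Proof.
  pose proof PI_RGT_0.
  apply is_lim_seq_incr_1.
  apply (is_lim_seq_ext _ _ _ (fun N => eq_sym (Dn_eq N))).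
  apply is_lim_seq_plus'.
  - apply lim_opp. apply is_lim_seq_continuous.
    apply (cont_of_der _ _ (/ (/ PI))). apply is_derive_ln. apply Rinv_0_lt_compat; lra.
    apply lim_T.
  - apply is_lim_seq_div'. apply lim_BL. apply lim_T. apply Rinv_neq_0_compat; lra.
Qed.

Lemma value_eq : - ln (/ PI) + (ss (fun i => uu i * ln (uu i)) k / INR k) / (/ PI)
   = 2 * Wsum s k / INR k - ln 2.
Proof.
  pose proof PI_RGT_0. pose proof HkR.
  rewrite ln_Rinv by lra.
  assert (E : PI * ss (fun i => uu i * ln (uu i)) k = 2 * Wsum s k - ln (2 * PI) * INR k).
  { rewrite <- sum_w. unfold Wsum.
    transitivity (ss (fun j => 2 * (w s k j * (ln (2 + 2 * cos (2 * (INR j * th s k))) / 2)) + (- ln (2 * PI)) * w s k j) k).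
    2:{ rewrite ss_plus, !ss_scal. ring. }
    rewrite <- ss_scal. apply ss_ext. intros j _.
    unfold uu. destruct (w_nonneg j) as [Hw|Hw].
    - replace (2 + 2 * cos (2 * (INR j * th s k))) with (2 * w s k j) by (unfold w; ring).
      rewrite ln_div by lra. rewrite !ln_mult by lra. field. lra.
    - rewrite <- Hw. field. lra. }
  replace ((ss (fun i => uu i * ln (uu i)) k / INR k) / (/ PI))
    with ((PI * ss (fun i => uu i * ln (uu i)) k) / INR k) by (field; lra).
  rewrite E, ln_mult by lra. field. lra.
Qed.

End PartI.

Theorem proposition1 (s k : nat) (x : R) :
  (0 < s)%nat -> (s < k)%nat -> Nat.gcd s k = 1%nat ->
  x = cos (PI * INR s / INR k) ->
  (Nat.Even k ->
     is_lim_seq (fun n => Dn n x) (1 - ln 2 + Rfun (/ INR k)) /\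
     1 - ln 2 + Rfun (/ INR k) > 1 - ln 2) /\
  (Nat.Odd k ->
     is_lim_seq (fun n => Dn n x)
       (1 - ln 2 + 2 * (Rfun (/ (2 * INR k)) - / 2 * Rfun (/ INR k))) /\
     1 - ln 2 + 2 * (Rfun (/ (2 * INR k)) - / 2 * Rfun (/ INR k)) < 1 - ln 2).
Proof.
  intros Hs Hsk Hg Hx. subst x.
  pose proof (Dn_lim s k Hs Hsk Hg) as HL.
  rewrite value_eq in HL by auto.
  pose proof (HkR s k Hs Hsk) as Hk.
  assert (Hk2 : 2 <= INR k) by (replace 2 with (INR 2) by (simpl; ring); apply le_INR; lia).
  assert (Hy : 0 < / INR k <= 1/2).
  { split. apply Rinv_0_lt_compat; lra.
    replace (1/2) with (/ 2) by field. apply Rinv_le_contravar; lra. }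
  replace (2 * Wsum s k / INR k - ln 2) with (2 * (Wsum s k / INR k) - ln 2) in HL by (field; lra).
  split; intro Hpar.
  - rewrite (Wsum_even s k Hs Hsk Hg Hpar) in HL. split.
    + replace (1 - ln 2 + Rfun (/ INR k)) with (2 * (/ 2 + / 2 * Rfun (/ INR k)) - ln 2) by field.
      exact HL.
    + pose proof (Rfun_pos _ Hy). lra.
  - rewrite (Wsum_odd s k Hs Hsk Hg Hpar) in HL. split.
    + replace (1 - ln 2 + 2 * (Rfun (/ (2 * INR k)) - / 2 * Rfun (/ INR k)))
        with (2 * (/ 2 + Rfun (/ (2 * INR k)) - / 2 * Rfun (/ INR k)) - ln 2) by field.
      exact HL.
    + pose proof (Rfun_odd _ Hy) as Ho.
      replace (/ INR k / 2) with (/ (2 * INR k)) in Ho by (field; lra). lra.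
Qed.
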